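(* Let $S\subseteq\mathcal S_d$ be nonempty, $[d]$ partitioned into groups $G_1,\dots,G_g$, $\bar\alpha,\bar\beta\in[0,1]^g$, $k\in[d]$, and assume the set $\mathcal F$ of $(\bar\alpha,\bar\beta)$-$k$-fair rankings in $\mathcal S_d$ is nonempty. Let $\tau$ be an $(\bar\alpha,\bar\beta)$-$k$-fair top-$k$ ranking minimizing $2\sum_{\pi\in S}\sum_{i\in D_\tau}(\pi(i)-\tau(i))\mathbb{1}[\tau(i)<\pi(i)]$, and let $\sigma\in\mathcal S_d$ be a ranking with $\sigma(a)=\tau(a)$ for all $a\in D_\tau$ minimizing $2\sum_{\pi\in S}\sum_{i\in[d]}(\pi(i)-\sigma(i))\mathbb{1}[\sigma(i)<\pi(i)]$ among such extensions. Then $\sigma\in\mathcal F$ and $\sum_{\pi\in S}\kappa(\pi,\sigma)\le 4\min_{\sigma'\in\mathcal F}\sum_{\pi\in S}\kappa(\pi,\sigma')$.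
   Context: $\mathcal{S}_d$ is the set of rankings of $[d]$, $\pi(a)$ the rank of $a$. A top-$k$ ranking is a bijection $\tau:D_\tau\to[k]$, $D_\tau\subseteq[d]$. A full or top-$k$ ranking is $(\bar\alpha,\bar\beta)$-$k$-fair if for every $i\in[g]$ its top $k$ positions contain at least $\lfloor\alpha_i k\rfloor$ and at most $\lceil\beta_i k\rceil$ members of $G_i$. $\kappa(\pi,\sigma)$ is the Kendall-tau distance: the number of unordered pairs $\{a,b\}$ ordered differently by $\pi$ and $\sigma$. $\mathbb{1}[\cdot]$ is the indicator function. *)

(* Defs.v *)
From mathcomp Require Import all_boot all_order all_algebra all_fingroup.
From mathcomp Require Import reals.
Set Implicit Arguments. Unset Strict Implicit. Unset Printing Implicit Defensive.
Import Order.TTheory GRing.Theory Num.Theory.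
Local Open Scope ring_scope.

(* Rankings of [d] = {perm 'I_d}; pi a (as a nat) is the rank of a,
   ranks are 0-based: position p of the paper is p.-1 here. *)

Definition fair_count (R : realType) (k c : nat) (a b : R) : bool :=
  (Num.floor (a * k%:R) <= c%:Z) && (c%:Z <= Num.ceil (b * k%:R)).

Definition fair_rank (R : realType) (d g k : nat) (grp : 'I_d -> 'I_g)
  (alpha beta : 'I_g -> R) (pi : {perm 'I_d}) : bool :=
  [forall i : 'I_g,
     fair_count k #|[set a : 'I_d | (grp a == i) && (pi a < k)%N]| (alpha i) (beta i)].

(* A top-k ranking tau : D_tau -> [k] is represented by its inverse
   pos : 'I_k -> 'I_d, injective, pos j = the element of rank j;
   D_tau = image of pos, and tau (pos j) = j. *)
Definition topk (d k : nat) (pos : 'I_k -> 'I_d) : Prop := injective pos.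

Definition fair_topk (R : realType) (d g k : nat) (grp : 'I_d -> 'I_g)
  (alpha beta : 'I_g -> R) (pos : 'I_k -> 'I_d) : bool :=
  [forall i : 'I_g,
     fair_count k #|[set j : 'I_k | grp (pos j) == i]| (alpha i) (beta i)].

Definition cost_topk (d k : nat) (S : {set {perm 'I_d}}) (pos : 'I_k -> 'I_d) : nat :=
  (2 * \sum_(pi in S) \sum_(j : 'I_k)
      ((pi (pos j) - j) * (j < pi (pos j))))%N.

Definition cost_full (d : nat) (S : {set {perm 'I_d}}) (sigma : {perm 'I_d}) : nat :=
  (2 * \sum_(pi in S) \sum_(i : 'I_d)
      ((pi i - sigma i) * (sigma i < pi i)))%N.

Definition extends (d k : nat) (pos : 'I_k -> 'I_d) (sigma : {perm 'I_d}) : bool :=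
  [forall j : 'I_k, (sigma (pos j) : nat) == (j : nat)].

Definition kendall (d : nat) (pi sigma : {perm 'I_d}) : nat :=
  #|[set p : 'I_d * 'I_d | (p.1 < p.2)%N &&
       ((pi p.1 < pi p.2)%N != (sigma p.1 < sigma p.2)%N)]|.

Definition kcost (d : nat) (S : {set {perm 'I_d}}) (sigma : {perm 'I_d}) : nat :=
  (\sum_(pi in S) kendall pi sigma)%N.

(* Main.v *)
Require Import Defs.
From mathcomp Require Import all_boot all_order all_algebra all_fingroup.
From mathcomp Require Import reals.
From mathcomp Require Import zify.
Import Order.TTheory GRing.Theory Num.Theory.
Set Implicit Arguments. Unset Strict Implicit. Unset Printing Implicit Defensive.

Lemma sum_interval (d a b : nat) :
  \sum_(t < d) (a <= t < b : nat) = minn b d - a.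
Proof.
elim: d => [|d IH]; first by rewrite big_ord0 minn0.
rewrite big_ord_recr /= IH.
case: (leqP b d) => hb; case: (leqP a d) => ha /=; lia.
Qed.

Lemma trunc_ind (a b : nat) : (a - b) * (b < a) = a - b.
Proof.
case: ltnP => h; rewrite ?muln1 ?muln0 //.
by apply/esym/eqP; rewrite subn_eq0.
Qed.

Lemma le_bool (b c : bool) : (b -> c) -> (b : nat) <= c.
Proof. by case: b; case: c => // ->. Qed.

Lemma sum_perm_lt d (s : {perm 'I_d}) n : n <= d ->
  \sum_(b : 'I_d) (s b < n : nat) = n.
Proof.
move=> hn.
rewrite -(reindex_inj (@perm_inj _ s) (P := xpredT) (F := fun t : 'I_d => (t < n : nat))) /=.
by rewrite (eq_bigr (fun t : 'I_d => (0 <= t < n : nat))) // sum_interval subn0 (minn_idPl hn).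
Qed.

Lemma eqperm d (s : {perm 'I_d}) x y : (s x == s y :> nat) = (x == y :> nat).
Proof. by rewrite !val_eqE (inj_eq perm_inj). Qed.

Lemma card_set_sum (T : finType) (P : pred T) : #|[set x | P x]| = \sum_x (P x : nat).
Proof.
rewrite -sum1_card big_mkcond; apply: eq_bigr => x _; rewrite inE; by case: (P x).
Qed.

Lemma card_pairs (T : finType) (P : T -> T -> bool) :
  #|[set p : T * T | P p.1 p.2]| = \sum_x \sum_y (P x y : nat).
Proof.
rewrite card_set_sum pair_big /=; by apply: eq_bigl.
Qed.

Lemma sum_eq1 (T : finType) (a : T) : \sum_x (x == a : nat) = 1.
Proof.
rewrite (bigD1 a) //= eqxx big1 // => b /negbTE -> //.
Qed.

Definition Ls d (pi s : {perm 'I_d}) (x : 'I_d) :=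
  \sum_y ((s x < s y) && (pi y < pi x) : nat).
Definition Rs d (pi s : {perm 'I_d}) (x : 'I_d) :=
  \sum_y ((s y < s x) && (pi x < pi y) : nat).

Lemma pw1 (u v w z : nat) : (u == v) = (w == z) ->
  (w < z) + ((u < v) && (z < w)) = (u < v) + ((v < u) && (w < z)).
Proof.
by case: (ltngtP u v); case: (ltngtP w z).
Qed.

Lemma identLR d (pi s : {perm 'I_d}) x : pi x + Rs pi s x = s x + Ls pi s x.
Proof.
rewrite -{1}(sum_perm_lt pi (ltnW (ltn_ord (pi x)))).
rewrite -{1}(sum_perm_lt s (ltnW (ltn_ord (s x)))).
rewrite /Rs /Ls -!big_split /=; apply: eq_bigr => y _.
by apply: pw1; rewrite !eqperm.
Qed.

Lemma pw2 (a b u v w z : nat) : (a == b) = (u == v) -> (a == b) = (w == z) ->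
  ((a < b) && ((w < z) != (u < v)) : nat) =
  ((a < b) && ((u < v) && (z < w))) + ((a < b) && ((v < u) && (w < z))).
Proof.
by case: (ltngtP a b); case: (ltngtP u v); case: (ltngtP w z) => //=.
Qed.

Lemma pw3 (a b u v w z : nat) : (a == b) = (u == v) ->
  ((a < b) && ((u < v) && (z < w)) : nat) + ((b < a) && ((u < v) && (z < w)))
  = ((u < v) && (z < w)).
Proof.
by case: (ltngtP a b); case: (ltngtP u v); case: (z < w) => //=.
Qed.

Lemma kendallE d (pi s : {perm 'I_d}) : kendall pi s = \sum_x Ls pi s x.
Proof.
rewrite /kendall (card_pairs (fun x y : 'I_d => (x < y) && ((pi x < pi y) != (s x < s y)))).
rewrite (eq_bigr (fun x : 'I_d => \sum_(y : 'I_d) (((x < y) && ((s x < s y) && (pi y < pi x)) : nat)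
   + ((x < y) && ((s y < s x) && (pi x < pi y)))))); last first.
  move=> x _; apply: eq_bigr => y _; apply: pw2; by rewrite eqperm.
rewrite (eq_bigr (fun x : 'I_d => \sum_(y : 'I_d) ((x < y) && ((s x < s y) && (pi y < pi x)) : nat)
   + \sum_(y : 'I_d) ((x < y) && ((s y < s x) && (pi x < pi y)) : nat))); last first.
  by move=> x _; rewrite big_split.
rewrite big_split /= [X in _ + X = _]exchange_big /= -big_split /=.
apply: eq_bigr => x _; rewrite -big_split /=; apply: eq_bigr => y _.
by apply: pw3; rewrite eqperm.
Qed.

Definition Ps d (pi s : {perm 'I_d}) := \sum_i (pi i - s i).

Lemma claimA d (pi s : {perm 'I_d}) : Ps pi s <= kendall pi s.
Proof.
rewrite kendallE /Ps; apply: leq_sum => x _.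
have := identLR pi s x; lia.
Qed.

Definition cs d (pi s : {perm 'I_d}) (t : nat) := \sum_y (s y <= t < pi y : nat).

Lemma pw4 (p q t : nat) : (p <= t) + (q <= t < p) = (q <= t) + (p <= t < q).
Proof. by case: (leqP p t); case: (leqP q t) => //= *; lia. Qed.

Lemma cs_sym d (pi s : {perm 'I_d}) t : t < d -> cs s pi t = cs pi s t.
Proof.
move=> td.
have e1 := sum_perm_lt pi td. have e2 := sum_perm_lt s td.
apply/eqP; rewrite -(eqn_add2l t.+1); apply/eqP.
rewrite -{1}e2 -{2}e1 /cs -!big_split /=; apply: eq_bigr => y _.
rewrite !ltnS; exact: pw4.
Qed.

Lemma claimB d (pi s : {perm 'I_d}) : kendall pi s <= 2 * Ps pi s.
Proof.
rewrite kendallE.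
apply: (@leq_trans (\sum_x ((pi x - s x) + cs pi s (pi x)))).
  apply: leq_sum => x _.
  have E := identLR pi s x.
  case: (ltnP (s x) (pi x)) => h.
    suff : Rs pi s x <= cs pi s (pi x) by lia.
    apply: leq_sum => y _; apply: le_bool => /andP [h1 h2].
    by rewrite h2 andbT; apply: ltnW; apply: ltn_trans h.
  rewrite -cs_sym //.
  have -> : pi x - s x = 0 by apply/eqP; rewrite subn_eq0.
  apply: leq_sum => y _; apply: le_bool => /andP [h1 h2].
  by rewrite (ltnW h2) /=; apply: leq_ltn_trans h h1.
rewrite big_split /= mul2n -addnn leq_add2l.
rewrite -(reindex_inj (@perm_inj _ pi) (P := xpredT) (F := fun t : 'I_d => cs pi s t)) /=.
rewrite /cs /Ps exchange_big /=; apply: leq_sum => y _.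
rewrite sum_interval (minn_idPl (ltnW (ltn_ord _))) //.
Qed.

Lemma reidx d k (s : {perm 'I_d}) (p : 'I_k -> 'I_d) (F : 'I_d -> nat) :
  (forall j, s (p j) = j :> nat) ->
  \sum_j F (p j) = \sum_(i | s i < k) F i.
Proof.
move=> hp.
have pinj : injective p.
  by move=> j j' e; apply: ord_inj; rewrite -(hp j) -(hp j') e.
transitivity (\sum_(j in [set: 'I_k]) F (p j)); first by apply: eq_bigl => j; rewrite inE.
rewrite -big_imset; last by move=> ? ? _ _; apply: pinj.
apply: eq_bigl => i; apply/imsetP/idP.
  by case=> j _ ->; rewrite hp.
move=> hi; exists (Ordinal hi) => //; apply: (@perm_inj _ s); apply: ord_inj; by rewrite hp.
Qed.

Lemma fair_transfer d k g (s : {perm 'I_d}) (p : 'I_k -> 'I_d) (grp : 'I_d -> 'I_g) i :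
  (forall j, s (p j) = j :> nat) ->
  #|[set a : 'I_d | (grp a == i) && (s a < k)]| = #|[set j : 'I_k | grp (p j) == i]|.
Proof.
move=> hp; rewrite !card_set_sum (reidx (fun a => (grp a == i : nat)) hp) big_mkcond /=.
rewrite [RHS]big_mkcond; apply: eq_bigr => a _; by case: (s a < k); rewrite ?andbT ?andbF.
Qed.

Lemma cost_topkE d k (S : {set {perm 'I_d}}) (s : {perm 'I_d}) (p : 'I_k -> 'I_d) :
  (forall j, s (p j) = j :> nat) ->
  cost_topk S p = 2 * \sum_(pi in S) \sum_(i | s i < k) (pi i - s i).
Proof.
move=> hp; rewrite /cost_topk; congr (2 * _); apply: eq_bigr => pi _.
rewrite -(reidx (fun i => pi i - s i) hp); apply: eq_bigr => j _.
by rewrite trunc_ind hp.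
Qed.

Lemma cost_fullE d (S : {set {perm 'I_d}}) (s : {perm 'I_d}) :
  cost_full S s = 2 * \sum_(pi in S) Ps pi s.
Proof.
rewrite /cost_full; congr (2 * _); apply: eq_bigr => pi _.
by apply: eq_bigr => i _; rewrite trunc_ind.
Qed.

Lemma exists_ext d k (s t : {perm 'I_d}) : k <= d ->
  exists r : {perm 'I_d}, (forall a, s a < k -> r a = s a :> nat) /\
                          (forall a, k <= s a -> t a <= r a).
Proof.
move=> kd.
pose cnt (a : 'I_d) := \sum_b ((k <= s b) && (t b < t a) : nat).
have hk : \sum_b (s b < k : nat) = k := sum_perm_lt s kd.
have hout : \sum_b (k <= s b : nat) = d - k.
  have : \sum_(b < d) ((s b < k : nat) + (k <= s b)) = d.
    rewrite (eq_bigr (fun b : 'I_d => (0 <= b < d : nat))); last first.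
      by move=> b _; rewrite ltn_ord; case: ltnP.
    by rewrite sum_interval minnn subn0.
  rewrite big_split /= hk => e; rewrite -[in RHS]e addKn //.
have cnt_lt : forall a, k <= s a -> cnt a + 1 <= d - k.
  move=> a ha; rewrite -hout -(sum_eq1 a) -big_split /=; apply: leq_sum => b _.
  case: (eqVneq b a) => [->|nba]; first by rewrite ltnn andbF ha.
  by rewrite addn0; apply: le_bool => /andP [].
have cnt_mono : forall a a', k <= s a -> t a < t a' -> cnt a + 1 <= cnt a'.
  move=> a a' ha hlt; rewrite -(sum_eq1 a) -big_split /=; apply: leq_sum => b _.
  case: (eqVneq b a) => [->|nba]; first by rewrite ltnn andbF ha hlt.
  rewrite addn0; apply: le_bool => /andP [h1 h2]; rewrite h1 /=.
  exact: ltn_trans h2 hlt.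
have cnt_ge : forall a, t a <= k + cnt a.
  move=> a; rewrite -{1}(sum_perm_lt t (ltnW (ltn_ord (t a)))) -{1}hk -big_split /=.
  apply: leq_sum => b _; case: (ltnP (s b) k) => //= _.
  by case: (t b < t a).
pose r (a : 'I_d) := if s a < k then (s a : nat) else k + cnt a.
have r_lt : forall a, r a < d.
  move=> a; rewrite /r; case: ifP => ha; first exact: ltn_ord.
  have := cnt_lt a; rewrite leqNgt ha /=; lia.
pose f (a : 'I_d) := Ordinal (r_lt a).
have finj : injective f.
  move=> a a' /(congr1 val) /=; rewrite /r.
  case: ifP => ha; case: ifP => ha'.
  - by move=> e; apply: (@perm_inj _ s); apply: ord_inj.
  - lia.
  - lia.
  - move=> e; case: (ltngtP (t a) (t a')) => h.
    + have := cnt_mono a a'; rewrite leqNgt ha => /(_ isT h); lia.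
    + have := cnt_mono a' a; rewrite leqNgt ha' => /(_ isT h); lia.
    + by apply: (@perm_inj _ t); apply: ord_inj.
exists (perm finj); split => a; rewrite permE /= /r.
  by move=> ->.
by move=> h; rewrite ltnNge h /=; exact: cnt_ge.
Qed.

Local Open Scope ring_scope.

Theorem mainTheorem8 (R : realType) (d g k : nat)
  (S : {set {perm 'I_d}}) (grp : 'I_d -> 'I_g) (alpha beta : 'I_g -> R)
  (pos : 'I_k -> 'I_d) (sigma : {perm 'I_d}) :
  S != set0 ->
  (forall i, 0 <= alpha i <= 1) -> (forall i, 0 <= beta i <= 1) ->
  (1 <= k)%N -> (k <= d)%N ->
  (exists pi : {perm 'I_d}, fair_rank k grp alpha beta pi) ->
  (* tau is a fair top-k ranking minimizing cost_topk among fair top-k rankings *)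
  topk pos -> fair_topk grp alpha beta pos ->
  (forall pos' : 'I_k -> 'I_d, topk pos' -> fair_topk grp alpha beta pos' ->
     (cost_topk S pos <= cost_topk S pos')%N) ->
  (* sigma extends tau and minimizes cost_full among extensions of tau *)
  extends pos sigma ->
  (forall sigma' : {perm 'I_d}, extends pos sigma' ->
     (cost_full S sigma <= cost_full S sigma')%N) ->
  fair_rank k grp alpha beta sigma /\
  (forall sigma' : {perm 'I_d}, fair_rank k grp alpha beta sigma' ->
     (kcost S sigma <= 4 * kcost S sigma')%N).
Proof.
move=> _ _ _ _ kd _ _ fpos hmin hext hminf.
have hp : forall j, (sigma (pos j) = j :> nat)%N.
  by move=> j; apply/eqP; exact: (forallP hext j).
split.
  apply/forallP => i; rewrite (fair_transfer _ _ hp); exact: (forallP fpos i).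
move=> s hs.
pose ps (j : 'I_k) := (s^-1 (widen_ord kd j))%g.
have hps : forall j, (s (ps j) = j :> nat)%N by move=> j; rewrite /ps permKV.
have fps : fair_topk grp alpha beta ps.
  apply/forallP => i; rewrite -(fair_transfer _ _ hps); exact: (forallP hs i).
have injps : topk ps.
  by move=> j j' e; apply: ord_inj; rewrite -(hps j) -(hps j') e.
have h4 := hmin ps injps fps.
rewrite (cost_topkE _ hp) (cost_topkE _ hps) in h4.
have [r [r1 r2]] := exists_ext sigma s kd.
have hextr : extends pos r.
  by apply/forallP => j; apply/eqP; rewrite r1 hp // ltn_ord.
have h2 := hminf r hextr; rewrite !cost_fullE in h2.
have h1 : (kcost S sigma <= 2 * \sum_(pi in S) Ps pi sigma)%N.
  by rewrite /kcost big_distrr /=; apply: leq_sum => pi _; exact: claimB.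
have h5 : (\sum_(pi in S) Ps pi s <= kcost S s)%N.
  by apply: leq_sum => pi _; exact: claimA.
have h3 : (\sum_(pi in S) Ps pi r <=
   \sum_(pi in S) \sum_(i | (sigma i < k)%N) (pi i - sigma i) + \sum_(pi in S) Ps pi s)%N.
  rewrite -big_split /=; apply: leq_sum => pi _.
  rewrite /Ps (bigID (fun i => (sigma i < k)%N)) /=; apply: leq_add.
    by apply: eq_leq; apply: eq_bigr => i hi; rewrite r1.
  apply: (@leq_trans (\sum_(i | ~~ (sigma i < k)%N) (pi i - s i))).
    apply: leq_sum => i hi; apply: leq_sub2l; apply: r2; by rewrite leqNgt.
  by rewrite [X in (_ <= X)%N](bigID (fun i => ~~ (sigma i < k)%N)) /= leq_addr.
have h6 : (\sum_(pi in S) \sum_(i | (s i < k)%N) (pi i - s i) <= \sum_(pi in S) Ps pi s)%N.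
  apply: leq_sum => pi _.
  by rewrite /Ps [X in (_ <= X)%N](bigID (fun i => (s i < k)%N)) /= leq_addr.
lia.
Qed.
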